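(* For every point of $\mathcal H$ and all $j,k\ge0$, the vector field $X_k$ of the central system satisfies $$\frac{\partial H^{(j)}}{\partial t_k}=-\pi_-\big(H^{(j)}H^{(k)}\big),$$ where $\pi_-$ is the projection onto $\mathcal H_-$ along $\mathcal H_+$ defined at that point.
   Context: Let $z$ be a formal variable and $\mathcal L$ the space of formal Laurent series $\sum_{j\le N} l_j z^j$ (finitely many positive powers of $z$). Let $\mathcal H$ be the set of sequences $H=(H^{(k)})_{k\ge0}$ of elements of $\mathcal L$ with $H^{(0)}=1$ and, for $k\ge1$, $H^{(k)}=z^k+\sum_{l\ge1}H^k_l z^{-l}$; the coefficients $H^k_l$ are coordinates on $\mathcal H$, and we set $H^0_l=0$. The central system (CS) is the family of vector fields $X_j$, $j\ge1$, on $\mathcal H$, with associated times $t_j$, defined by $$\frac{\partial H^{(k)}}{\partial t_j}=H^{(j+k)}-H^{(j)}H^{(k)}+\sum_{l=1}^{k}H^j_lH^{(k-l)}+\sum_{l=1}^{j}H^k_lH^{(j-l)},\qquad k\ge0;$$ the right-hand side contains only negative powers of $z$, so this determines the components $X_j(H^k_l)$. For $H\in\mathcal H$ let $\mathcal H_+=\mathrm{span}\{H^{(k)}:k\ge0\}$ (finite linear combinations) and $\mathcal H_-=\{\sum_{l\ge1}c_lz^{-l}\}$, so that $\mathcal L=\mathcal H_+\oplus\mathcal H_-$; let $\pi_\pm$ be the corresponding projections. *)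

(* Defs.v *)
From HB Require Import structures.
From mathcomp Require Import all_boot all_order all_algebra.
From mathcomp Require Import boolp classical_sets fsbigop.
From Stdlib Require Import ClassicalEpsilon.
Set Implicit Arguments. Unset Strict Implicit. Unset Printing Implicit Defensive.
Import Order.TTheory GRing.Theory Num.Theory.
Local Open Scope ring_scope.

(* A formal Laurent series  sum_n l_n z^n  over the field R is represented by
   its coefficient function  int -> R  (coefficient of z^n). *)
Definition laurent (R : fieldType) := int -> R.

Definition is_laurent (R : fieldType) (f : laurent R) : Prop :=
  exists N : int, forall n : int, N < n -> f n = 0.

(* Product of Laurent series: (f g)_n = sum_{a} f_a g_{n-a}; for elements of L
   this sum has finite support; \sum_(a \in setT) is the finitely supported sum. *)
Definition lmul (R : fieldType) (f g : laurent R) : laurent R :=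
  fun n => \sum_(a \in [set: int]) f a * g (n - a).

(* A point of calH is given by its coordinates H k l = H^k_l (k >= 1, l >= 1);
   entries with k = 0 or l = 0 are irrelevant.  Convention H^0_l = 0: *)
Definition Hc (R : fieldType) (H : nat -> nat -> R) (k l : nat) : R :=
  if k == 0%N then 0 else H k l.

(* The series H^(k): H^(0) = 1, H^(k) = z^k + sum_{l>=1} H^k_l z^{-l}. *)
Definition Hser (R : fieldType) (H : nat -> nat -> R) (k : nat) : laurent R :=
  fun n => if k == 0%N then (n == 0)%:R
           else if n == k%:Z then 1
           else if n < 0 then H k `|n|%N else 0.

(* Right-hand side of the central system for d H^(k) / d t_j. *)
Definition CS_rhs (R : fieldType) (H : nat -> nat -> R) (j k : nat) : laurent R :=
  fun n => Hser H (j + k) n - lmul (Hser H j) (Hser H k) n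
           + \sum_(1 <= l < k.+1) Hc H j l * Hser H (k - l) n
           + \sum_(1 <= l < j.+1) Hc H k l * Hser H (j - l) n.

(* Components of the vector field X_j: X_j(H^k_l) = coefficient of z^{-l}
   in the right-hand side. *)
Definition X (R : fieldType) (H : nat -> nat -> R) (j k l : nat) : R :=
  CS_rhs H j k (- (l%:Z)).

(* dH^(k)/dt_j := sum_{l>=1} X_j(H^k_l) z^{-l}  (the z^k term is constant). *)
Definition dHdt (R : fieldType) (H : nat -> nat -> R) (j k : nat) : laurent R :=
  fun n => if n < 0 then X H j k `|n|%N else 0.

Definition in_Hplus (R : fieldType) (H : nat -> nat -> R) (f : laurent R) : Prop :=
  exists (N : nat) (c : nat -> R),
    forall n : int, f n = \sum_(k < N) c k * Hser H k n.

Definition in_Hminus (R : fieldType) (f : laurent R) : Prop :=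
  forall n : int, 0 <= n -> f n = 0.

Definition pi_minus (R : fieldType) (H : nat -> nat -> R) (f : laurent R) : laurent R :=
  epsilon (inhabits (fun _ : int => 0 : R))
          (fun g : laurent R => in_Hminus g /\ in_Hplus H (fun n => f n - g n)).

(* Main.v *)
Require Import Defs.
From HB Require Import structures.
From mathcomp Require Import all_boot all_order all_algebra.
From mathcomp Require Import boolp classical_sets fsbigop.
From mathcomp Require Import zify ring.
From Stdlib Require Import ClassicalEpsilon.
Import Order.TTheory GRing.Theory Num.Theory.
Local Open Scope ring_scope.

Lemma fsum_supp2 (R : fieldType) (F : int -> R) (x y : int) :
  (forall a, a != x -> a != y -> F a = 0) ->
  \sum_(a \in [set: int]) F a = if x == y then F x else F x + F y.
Proof.
move=> H0.
have Hr : forall r : seq int, uniq r -> x \in r -> y \in r ->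
   \sum_(a \in [set: int]) F a = \sum_(a <- r) F a.
  move=> r ur xr yr.
  rewrite (fsbig_seq _ _ ur) (fsbig_widen [set` r] [set: int] F) //.
  move=> a [_ /= ar]; apply: H0; apply/negP => /eqP ?; subst a; exact: ar.
have [e|nxy] := eqVneq x y; first subst y.
  by rewrite (Hr [:: x]) ?inE ?eqxx // big_seq1.
rewrite (Hr [:: x; y]); [|by rewrite /= inE andbT|by rewrite !inE eqxx|by rewrite !inE eqxx orbT].
by rewrite big_cons big_seq1.
Qed.

Section S.
Variables (R : fieldType) (H : nat -> nat -> R).

Lemma Hser_nat (q m : nat) : Hser H q m%:Z = (m == q)%:R.
Proof.
rewrite /Hser; have [->|q0] := eqVneq q 0%N; first by [].
rewrite eqz_nat; have [_|mq] := eqVneq m q; first by [].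
have -> : (m%:Z < 0) = false by lia. by [].
Qed.

Lemma Hser_neg (q : nat) (n : int) : n < 0 -> Hser H q n = Hc H q `|n|%N.
Proof.
move=> n0; rewrite /Hser /Hc n0; case: ifP => // _.
  by rewrite (negbTE (ltr0_neq0 n0)).
case: ifP => // /eqP e; exfalso; move: n0; rewrite e; lia.
Qed.

Lemma Hser_diff (q m p : nat) : Hser H q (m%:Z - p%:Z) =
  if (m < p)%N then Hc H q (p - m) else ((m - p)%N == q)%:R.
Proof.
case: ltnP => mp.
  rewrite Hser_neg; last by lia.
  congr Hc; lia.
have -> : m%:Z - p%:Z = (m - p)%N%:Z by lia.
exact: Hser_nat.
Qed.


Lemma lmul_nat (p q m : nat) : lmul (Hser H p) (Hser H q) m%:Z =
  if m == (p + q)%N then 1 else Hser H q (m%:Z - p%:Z) + Hser H p (m%:Z - q%:Z).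
Proof.
rewrite /lmul (@fsum_supp2 _ _ p%:Z (m%:Z - q%:Z)); last first.
  move=> a ap aq; case: (ltrP a 0) => a0.
    rewrite [Hser H q _](_ : _ = 0) ?mulr0 //.
    have -> : m%:Z - a = (`|m%:Z - a|%N)%:Z by lia.
    rewrite Hser_nat; case: eqP => // e; exfalso; move/eqP: aq; apply; lia.
  have -> : a = (`|a|%N)%:Z by lia.
  rewrite Hser_nat; case: eqP => [e|]; last by rewrite mul0r.
  by exfalso; move/eqP: ap; apply; lia.
have -> : (p%:Z == m%:Z - q%:Z) = (m == (p + q)%N) by apply/eqP/eqP; lia.
rewrite Hser_nat eqxx mul1r; case: eqP => [e|_].
  have -> : m%:Z - p%:Z = q%:Z by lia.
  by rewrite Hser_nat eqxx.
have -> : m%:Z - (m%:Z - q%:Z) = q%:Z by lia.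
by rewrite Hser_nat eqxx mulr1.
Qed.

Lemma sum_delta (G : nat -> R) (j m : nat) :
  \sum_(1 <= l < j.+1) G l * Hser H (j - l) m%:Z =
  if (m < j)%N then G (j - m)%N else 0.
Proof.
under eq_bigr do rewrite Hser_nat.
case: ltnP => mj.
  rewrite (bigD1_seq (j - m)%N) /=; last exact: iota_uniq.
    rewrite big1_seq ?addr0; last first.
      move=> l /andP[nl lr]; rewrite mem_index_iota in lr. case: eqP => [e|]; last by rewrite mulr0.
      by exfalso; move/eqP: nl; apply; lia.
    have -> : (m == j - (j - m))%N by apply/eqP; lia.
    by rewrite mulr1.
  rewrite mem_index_iota; lia.
rewrite big_seq big1 // => l; rewrite mem_index_iota => lr.
case: eqP => [e|]; last by rewrite mulr0.
by exfalso; lia.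
Qed.

Lemma CS_nat (j k m : nat) : CS_rhs H j k m%:Z = 0.
Proof.
rewrite /CS_rhs !sum_delta lmul_nat !Hser_diff Hser_nat.
case: eqP => [e|ne].
  have -> : (m < k)%N = false by lia.
  have -> : (m < j)%N = false by lia.
  by rewrite subrr !addr0.
case: ltnP => mj; case: ltnP => mk.
- by rewrite /=; ring.
- rewrite (_ : ((m - k)%N == j) = false); last by apply/eqP; lia.
  by rewrite /=; ring.
- rewrite (_ : ((m - j)%N == k) = false); last by apply/eqP; lia.
  by rewrite /=; ring.
- rewrite (_ : ((m - k)%N == j) = false); last by apply/eqP; lia.
  rewrite (_ : ((m - j)%N == k) = false); last by apply/eqP; lia.
  by rewrite /=; ring.
Qed.


Lemma lmul_comm (f g : laurent R) n : lmul f g n = lmul g f n.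
Proof.
rewrite /lmul [RHS](reindex_fsbigT (fun a => n - a)); last first.
  by exists (fun a => n - a) => a; rewrite subKr.
by apply: eq_fsbigr => a _; rewrite subKr mulrC.
Qed.

Lemma in_Hplus_ext (h1 h2 : laurent R) : (forall n, h1 n = h2 n) ->
  in_Hplus H h1 -> in_Hplus H h2.
Proof. by move=> e [N [c hc]]; exists N, c => n; rewrite -e. Qed.

Lemma in_Hplus_ser (m : nat) : in_Hplus H (Hser H m).
Proof.
exists m.+1, (fun k => (k == m)%:R) => n.
rewrite big_ord_recr /= eqxx mul1r big1 ?add0r // => i _.
by rewrite (_ : (i == m :> nat) = false) ?mul0r //; apply/negbTE; rewrite neq_ltn ltn_ord.
Qed.

Lemma in_Hplus0 : in_Hplus H (fun _ => 0).
Proof. by exists 0%N, (fun _ => 0) => n; rewrite big_ord0. Qed.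

Lemma in_Hplus_scale a (h : laurent R) : in_Hplus H h -> in_Hplus H (fun n => a * h n).
Proof.
move=> [N [c hc]]; exists N, (fun k => a * c k) => n.
by rewrite hc mulr_sumr; apply: eq_bigr => i _; rewrite mulrA.
Qed.

Lemma widen_sum (N M : nat) (c : nat -> R) n : (N <= M)%N ->
  \sum_(k < N) c k * Hser H k n = \sum_(k < M) (if (k < N)%N then c k else 0) * Hser H k n.
Proof.
move=> NM; rewrite (big_ord_widen _ (fun k => c k * Hser H k n) NM) big_mkcond.
by apply: eq_bigr => i _; case: ifP => _; rewrite ?mul0r.
Qed.

Lemma in_Hplus_add (h1 h2 : laurent R) : in_Hplus H h1 -> in_Hplus H h2 ->
  in_Hplus H (fun n => h1 n + h2 n).
Proof.
move=> [N1 [c1 e1]] [N2 [c2 e2]].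
exists (N1 + N2)%N, (fun k => (if (k < N1)%N then c1 k else 0) + (if (k < N2)%N then c2 k else 0)) => n.
rewrite e1 e2 (@widen_sum N1 (N1 + N2)%N c1 n) ?leq_addr //.
rewrite (@widen_sum N2 (N1 + N2)%N c2 n) ?leq_addl // -big_split /=.
by apply: eq_bigr => i _; rewrite mulrDl.
Qed.

Lemma in_Hplus_sum (s : seq nat) (F : nat -> laurent R) :
  (forall i, in_Hplus H (F i)) -> in_Hplus H (fun n => \sum_(i <- s) F i n).
Proof.
move=> hF; elim: s => [|a s IH].
  by apply: (in_Hplus_ext _ _ _ in_Hplus0) => n; rewrite big_nil.
apply: (in_Hplus_ext _ _ _ (in_Hplus_add _ _ (hF a) IH)) => n.
by rewrite big_cons.
Qed.

Lemma Hplus_Hminus0 (h : laurent R) : in_Hplus H h -> in_Hminus h -> forall n, h n = 0.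
Proof.
move=> [N [c e]] hm.
have cz : forall m : 'I_N, c m = 0.
  move=> m; have := hm m%:Z; rewrite e lez_nat => /(_ isT).
  rewrite (bigD1 m) //= Hser_nat eqxx mulr1 big1 ?addr0 // => i ni.
  rewrite Hser_nat; case: eqP => [ei|]; last by rewrite mulr0.
  by exfalso; move/negP: ni; apply; apply/eqP/val_inj.
by move=> n; rewrite e big1 // => i _; rewrite cz mul0r.
Qed.


Lemma dHdt_CS (j k : nat) n : dHdt H j k n = CS_rhs H j k n.
Proof.
rewrite /dHdt /X; case: ltrP => n0.
  by congr CS_rhs; lia.
have -> : n = (`|n|%N)%:Z by lia.
by rewrite CS_nat.
Qed.

Lemma main_aux (j k : nat) :
  pi_minus H (lmul (Hser H j) (Hser H k)) = (fun n => - dHdt H k j n).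
Proof.
set f := lmul (Hser H j) (Hser H k).
set g := (fun n => - dHdt H k j n).
have gm : in_Hminus g.
  by move=> n n0; rewrite /g /dHdt ltNge n0 /= oppr0.
have gp : in_Hplus H (fun n => f n - g n).
  apply: (in_Hplus_ext (fun n => (Hser H (k + j) n +
     \sum_(l <- index_iota 1 j.+1) Hc H k l * Hser H (j - l) n) +
     \sum_(l <- index_iota 1 k.+1) Hc H j l * Hser H (k - l) n)).
    move=> n; rewrite /g dHdt_CS /CS_rhs /f lmul_comm; ring.
  apply: in_Hplus_add; first apply: in_Hplus_add.
  - exact: in_Hplus_ser.
  - by apply: in_Hplus_sum => l; apply: in_Hplus_scale; apply: in_Hplus_ser.
  - by apply: in_Hplus_sum => l; apply: in_Hplus_scale; apply: in_Hplus_ser.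
rewrite /pi_minus.
set P := (fun g0 : laurent R => _).
have [g'm g'p] : P (epsilon (inhabits (fun _ : int => 0 : R)) P).
  by apply: epsilon_spec; exists g.
set g' := epsilon _ _ in g'm g'p *.
apply: funext => n.
have d : in_Hplus H (fun n => g n - g' n).
  apply: (in_Hplus_ext _ _ _ (in_Hplus_add _ _ g'p (in_Hplus_scale (-1) _ gp))).
  by move=> m /=; ring.
have dm : in_Hminus (fun n => g n - g' n).
  by move=> m m0; rewrite gm // g'm // subrr.
have e := Hplus_Hminus0 _ d dm n.
by apply/eqP; rewrite eq_sym -subr_eq0 e.
Qed.

End S.

Theorem mainTheorem2 (R : fieldType) (H : nat -> nat -> R) (j k : nat) :
  dHdt H k j = (fun n : int => - pi_minus H (lmul (Hser H j) (Hser H k)) n).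
Proof.
rewrite main_aux; apply: funext => n; by rewrite opprK.
Qed.
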